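(* For all real $z$ with $0<|z|\le 1$, \[ \sum_{k=1}^\infty\frac{\zeta(2k)z^{2k}}{(k+1)(2k+1)} = \frac12-\frac{\zeta(3)}{2\pi^2z^2}+\frac{\operatorname{Cl}_3(2\pi z)}{2\pi^2z^2}+\frac{\operatorname{Cl}_2(2\pi z)}{2\pi z}. \]
   Context: $\zeta$ is the Riemann zeta function. $\operatorname{Cl}_2(x)=\sum_{k\ge1}\sin(kx)/k^2$ and $\operatorname{Cl}_3(x)=\sum_{k\ge1}\cos(kx)/k^3$ are Clausen functions. *)

(* Defs.v *)
From Stdlib Require Import Reals.
From Coquelicot Require Import Coquelicot.
Open Scope R_scope.

Definition zeta (s : nat) : R := Series (fun n : nat => / (INR (n + 1)) ^ s).

Definition Cl2 (x : R) : R :=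
  Series (fun n : nat => sin (INR (n + 1) * x) / (INR (n + 1)) ^ 2).
Definition Cl3 (x : R) : R :=
  Series (fun n : nat => cos (INR (n + 1) * x) / (INR (n + 1)) ^ 3).

(* Main.v *)
Require Import Defs.
From Stdlib Require Import Reals Lra Lia Psatz.
From Coquelicot Require Import Coquelicot.
Open Scope R_scope.

Lemma cpt_cont f t : continuity_pt f t -> continuous f t.
Proof. intro H; apply continuity_pt_filterlim; exact H. Qed.

Lemma ex_RInt_cpt f a b : (forall t, Rmin a b <= t <= Rmax a b -> continuity_pt f t) -> ex_RInt f a b.
Proof. intro H; apply (ex_RInt_continuous (V:=R_CompleteNormedModule)); intros; apply cpt_cont; auto. Qed.

Lemma cpt_of_deriv f t : ex_derive f t -> continuity_pt f t.
Proof. intro H; apply continuity_pt_filterlim; apply (ex_derive_continuous f); auto. Qed.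

Lemma cpt_cos_lin M c t : continuity_pt (fun t => cos (M*t+c)) t.
Proof. apply cpt_of_deriv. auto_derive. auto. Qed.

Lemma cpt_phicos phi M c t : continuity_pt phi t -> continuity_pt (fun t => phi t * cos (M*t+c)) t.
Proof. intro H. apply continuity_pt_mult; auto. apply cpt_cos_lin. Qed.

Lemma RL_main (phi : R -> R) (a b c : R) : a < b ->
  (forall t, a <= t <= b -> continuity_pt phi t) ->
  forall eps, 0 < eps -> exists M0, forall M, M0 <= M ->
  Rabs (RInt (fun t => phi t * cos (M*t + c)) a b) < eps.
Proof.
  intros Hab Hc eps Heps.
  destruct (continuity_ab_maj (fun t => Rabs (phi t)) a b) as [Mx [HMx HMxab]].
  { lra. }
  { intros t Ht. apply continuity_pt_comp with (f1 := phi) (f2 := Rabs); auto.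
    apply Rcontinuity_abs. }
  set (B := Rabs (phi Mx) + 1).
  assert (HB : 0 < B) by (unfold B; pose proof (Rabs_pos (phi Mx)); lra).
  assert (HBb : forall t, a <= t <= b -> Rabs (phi t) <= B).
  { intros t Ht. specialize (HMx t Ht). unfold B; lra. }
  set (L := b - a).
  assert (HLdef : L = b - a) by reflexivity.
  assert (HL : 0 < L) by (unfold L; lra).
  destruct (Heine_cor2 Hc (mkposreal (eps / L) (Rdiv_lt_0_compat _ _ Heps HL))) as [d0 Hd0].
  simpl in Hd0.
  set (m := Rmin d0 L / 2).
  assert (Hm : 0 < m) by (unfold m; pose proof (cond_pos d0); unfold Rmin; destruct Rle_dec; lra).
  assert (Hmd : m < d0) by (unfold m; pose proof (cond_pos d0); unfold Rmin; destruct Rle_dec; lra).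
  assert (HmL : m < L) by (unfold m; pose proof (cond_pos d0); unfold Rmin; destruct Rle_dec; lra).
  exists (PI / m + 4 * PI * B / eps + 1).
  intros M HM.
  pose proof PI_RGT_0 as HPI.
  assert (HPm : 0 < PI / m) by (apply Rdiv_lt_0_compat; lra).
  assert (HPB : 0 < 4 * PI * B / eps) by (apply Rdiv_lt_0_compat; nra).
  assert (HMpos : 0 < M) by lra.
  set (d := PI / M).
  assert (Hdpos : 0 < d) by (unfold d; apply Rdiv_lt_0_compat; lra).
  assert (Hdm : d <= m).
  { unfold d. apply Rle_trans with (PI / (PI / m)).
    - apply Rmult_le_compat_l; [lra|]. apply Rinv_le_contravar; lra.
    - right. field. lra. }
  assert (HdB : d * B <= eps / 4).
  { unfold d. apply Rle_trans with (PI / (4 * PI * B / eps) * B).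
    - apply Rmult_le_compat_r; [lra|]. apply Rmult_le_compat_l; [lra|].
      apply Rinv_le_contravar; lra.
    - right. field. split; lra. }
  assert (HMd : M * d = PI) by (unfold d; field; lra).
  set (f := fun t => phi t * cos (M*t + c)).
  change (Rabs (RInt f a b) < eps).
  assert (Hexf : forall u v, a <= u <= b -> a <= v <= b -> ex_RInt f u v).
  { intros u v Hu Hv. apply ex_RInt_cpt. intros t Ht. apply cpt_phicos. apply Hc.
    split; [apply Rle_trans with (Rmin u v) | apply Rle_trans with (Rmax u v)]; try tauto.
    apply Rmin_glb; tauto. apply Rmax_lub; tauto. }
  set (g := fun s => (phi s - phi (s + d)) * cos (M*s + c)).
  assert (Hfg : forall s, f s + f (s + d) = g s).
  { intro s. unfold f, g. replace (M * (s + d) + c) with ((M*s + c) + PI) by (rewrite <- HMd; ring).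
    rewrite neg_cos. ring. }
  assert (Hshift : RInt f (a + d) b = RInt (fun s => f (s + d)) a (b - d)).
  { symmetry. apply is_RInt_unique.
    assert (H1 : is_RInt f (1 * a + d) (1 * (b - d) + d) (RInt f (a + d) b)).
    { replace (1 * a + d) with (a + d) by ring. replace (1 * (b - d) + d) with b by ring.
      apply (RInt_correct (V:=R_CompleteNormedModule)). apply Hexf; split; lra. }
    pose proof (is_RInt_comp_lin _ _ _ _ _ _ H1) as H2.
    eapply is_RInt_ext; [|exact H2]. intros s _. cbv beta. replace (1*s+d) with (s+d) by ring. apply (scal_one (K:=R_Ring)). }
  assert (Hexs : ex_RInt (fun s => f (s + d)) a (b - d)).
  { apply ex_RInt_cpt. intros t Ht. unfold f.
    apply continuity_pt_mult.
    - apply continuity_pt_comp with (f1 := fun s => s + d) (f2 := phi).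
      + apply continuity_pt_plus. apply derivable_continuous_pt; apply derivable_pt_id.
        apply continuity_pt_const. intros u v; reflexivity.
      + apply Hc. rewrite Rmin_left in Ht by lra. rewrite Rmax_right in Ht by lra. split; lra.
    - apply cpt_of_deriv. auto_derive. auto. }
  assert (E1 : RInt f a b = RInt f a (a + d) + RInt f (a + d) b).
  { symmetry. apply (RInt_Chasles f a (a+d) b); apply Hexf; split; lra. }
  assert (E2 : RInt f a b = RInt f a (b - d) + RInt f (b - d) b).
  { symmetry. apply (RInt_Chasles f a (b - d) b); apply Hexf; split; lra. }
  assert (E3 : RInt f a (b - d) + RInt (fun s => f (s + d)) a (b - d) = RInt g a (b - d)).
  { transitivity (RInt (fun s => f s + f (s+d)) a (b-d)).
    - symmetry. apply is_RInt_unique.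
      apply (is_RInt_plus f (fun s => f (s+d)));
        apply (RInt_correct (V:=R_CompleteNormedModule)); auto. apply Hexf; split; lra.
    - apply RInt_ext. intros; apply Hfg. }
  assert (B1 : Rabs (RInt f a (a + d)) <= d * B).
  { replace (d * B) with ((a + d - a) * B) by ring.
    apply abs_RInt_le_const; [lra| apply Hexf; split; lra|].
    intros t Ht. unfold f. rewrite Rabs_mult.
    replace B with (B * 1) by ring. apply Rmult_le_compat; try apply Rabs_pos.
    apply HBb; split; lra. apply Rabs_le; apply COS_bound. }
  assert (B2 : Rabs (RInt f (b - d) b) <= d * B).
  { replace (d * B) with ((b - (b - d)) * B) by ring.
    apply abs_RInt_le_const; [lra| apply Hexf; split; lra|].
    intros t Ht. unfold f. rewrite Rabs_mult.
    replace B with (B * 1) by ring. apply Rmult_le_compat; try apply Rabs_pos.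
    apply HBb; split; lra. apply Rabs_le; apply COS_bound. }
  assert (B3 : Rabs (RInt g a (b - d)) <= (b - d - a) * (eps / L)).
  { apply abs_RInt_le_const; [lra| |].
    - apply (ex_RInt_ext (fun s => f s + f (s+d))). intros; apply Hfg.
      apply (ex_RInt_plus f (fun s => f (s+d))); auto. apply Hexf; split; lra.
    - intros t Ht. unfold g. rewrite Rabs_mult.
      replace (eps / L) with (eps / L * 1) by ring. apply Rmult_le_compat; try apply Rabs_pos.
      + left. apply Hd0; try (split; lra). replace (t - (t + d)) with (- d) by ring.
        rewrite Rabs_Ropp, Rabs_pos_eq; lra.
      + apply Rabs_le; apply COS_bound. }
  assert (B4 : (b - d - a) * (eps / L) <= eps).
  { apply Rle_trans with (L * (eps / L)). apply Rmult_le_compat_r.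
    left; apply Rdiv_lt_0_compat; lra. unfold L; lra. right; field; lra. }
  assert (Hsum : 2 * RInt f a b = RInt f a (a + d) + RInt f (b - d) b + RInt g a (b - d)).
  { rewrite <- E3, <- Hshift. lra. }
  assert (Rabs (2 * RInt f a b) <= d * B + d * B + eps).
  { rewrite Hsum. eapply Rle_trans. apply Rabs_triang. 
    eapply Rle_trans. apply Rplus_le_compat_r. apply Rabs_triang. lra. }
  rewrite Rabs_mult, Rabs_pos_eq in H by lra. lra.
Qed.

Ltac toR := match goal with |- ?a = ?b => change (@eq R a b) end.
Ltac neq0 := repeat split; first [apply Rgt_not_eq; lra | apply Rlt_not_eq; lra | apply Rgt_not_eq; nra | apply Rlt_not_eq; nra].
Lemma abs_cos_le1 y : Rabs (cos y) <= 1.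
Proof. apply Rabs_le; apply COS_bound. Qed.
Lemma abs_sin_le1 y : Rabs (sin y) <= 1.
Proof. apply Rabs_le; apply SIN_bound. Qed.
Ltac simplR := cbv beta; repeat (change (minus ?a ?b) with (a - b)); repeat (change (plus ?a ?b) with (a+b)); repeat (change (opp ?a) with (-a));
  repeat (change (scal ?a ?b) with (a*b)); repeat (change (mult ?a ?b) with (a*b)).
Ltac fix_sum := repeat match goal with |- context [@sum_n ?G ?a ?n] =>
  progress change (@sum_n G a n) with (@sum_n R_AbelianMonoid a n) end.

Lemma is_series_lim a l : is_series a l <-> is_lim_seq (sum_n a) (Finite l).
Proof. split; intro H; exact H. Qed.

Lemma sum_n_nonneg u N : (forall n, 0 <= u n) -> 0 <= sum_n u N.
Proof.
  intro H. induction N. rewrite sum_O. apply H.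
  rewrite sum_Sn. change (plus (sum_n u N) (u (S N))) with (sum_n u N + u (S N)).
  specialize (H (S N)). lra.
Qed.

Lemma sum_n_mono u N M : (forall n, 0 <= u n) -> (N <= M)%nat -> sum_n u N <= sum_n u M.
Proof.
  intros H HNM. induction HNM. lra.
  rewrite sum_Sn. change (plus (sum_n u m) (u (S m))) with (sum_n u m + u (S m)).
  specialize (H (S m)). lra.
Qed.

Lemma partial_le u l N : (forall n, 0 <= u n) -> is_series u l -> sum_n u N <= l.
Proof.
  intros H Hs. apply is_series_lim in Hs.
  assert (Hc : is_lim_seq (fun _ : nat => sum_n u N) (sum_n u N)) by apply is_lim_seq_const.
  assert (Hs' : is_lim_seq (fun M => sum_n u (N + M)) l).
  { apply (is_lim_seq_incr_n (sum_n u) N l) in Hs. eapply is_lim_seq_ext; [|exact Hs].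
    intro n; simpl; rewrite Nat.add_comm; reflexivity. }
  pose proof (is_lim_seq_le _ _ _ _ (fun M => sum_n_mono u N (N + M) H ltac:(lia)) Hc Hs') as Hle.
  exact Hle.
Qed.

Lemma term_le u l n : (forall n, 0 <= u n) -> is_series u l -> u n <= l.
Proof.
  intros H Hs. apply Rle_trans with (sum_n u n); [|apply partial_le; auto].
  destruct n. rewrite sum_O; lra. rewrite sum_Sn.
  change (plus (sum_n u n) (u (S n))) with (sum_n u n + u (S n)).
  pose proof (sum_n_nonneg u n H). lra.
Qed.

Lemma bounded_series u B : (forall n, 0 <= u n) -> (forall N, sum_n u N <= B) ->
  exists l, is_series u l /\ l <= B.
Proof.
  intros H HB.
  destruct (ex_finite_lim_seq_incr (sum_n u) B) as [l Hl].
  - intro n. rewrite sum_Sn. change (plus (sum_n u n) (u (S n))) with (sum_n u n + u (S n)).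
    specialize (H (S n)); lra.
  - exact HB.
  - exists l. split. exact Hl.
    pose proof (is_lim_seq_le _ _ _ _ HB Hl (is_lim_seq_const B)) as Hle. exact Hle.
Qed.

Lemma lim_sum_n (f : nat -> nat -> R) (l : nat -> R) K :
  (forall k, is_lim_seq (fun N => f N k) (l k)) ->
  is_lim_seq (fun N => sum_n (f N) K) (sum_n l K).
Proof.
  intro H. induction K.
  - rewrite sum_O. eapply is_lim_seq_ext; [|apply H]. intro; rewrite sum_O; reflexivity.
  - rewrite sum_Sn. apply is_lim_seq_ext with (u := fun N => sum_n (f N) K + f N (S K)).
    { intro N. rewrite sum_Sn. reflexivity. }
    apply (is_lim_seq_plus' _ _ _ _ IHK (H (S K))).
Qed.

Lemma swap_part (a : nat -> nat -> R) (r c : nat -> R) S :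
  (forall n k, 0 <= a n k) -> (forall n, is_series (a n) (r n)) ->
  (forall k, is_series (fun n => a n k) (c k)) -> is_series r S ->
  forall K, sum_n c K <= S.
Proof.
  intros Ha Hr Hc HS K.
  assert (H1 : is_lim_seq (fun N => sum_n (fun k => sum_n (fun n => a n k) N) K) (sum_n c K)).
  { apply (lim_sum_n (fun N k => sum_n (fun n => a n k) N) c K). intro k. apply Hc. }
  assert (H2 : forall N, sum_n (fun k => sum_n (fun n => a n k) N) K <= sum_n r N).
  { intro N. rewrite <- sum_n_switch. unfold sum_n. apply sum_n_m_le. intro n.
    apply partial_le; auto. }
  assert (Hrn : forall n, 0 <= r n).
  { intro n. apply Rle_trans with (sum_n (a n) 0). rewrite sum_O; auto. apply partial_le; auto. }
  pose proof (is_lim_seq_le _ _ _ _ H2 H1 (proj1 (is_series_lim _ _) HS)) as Hle. exact Hle.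
Qed.

Lemma swap_nonneg (a : nat -> nat -> R) (r : nat -> R) (S : R) :
  (forall n k, 0 <= a n k) -> (forall n, is_series (a n) (r n)) -> is_series r S ->
  exists c, (forall k, is_series (fun n => a n k) (c k)) /\ is_series c S.
Proof.
  intros Ha Hr HS.
  assert (Hrn : forall n, 0 <= r n).
  { intro n. apply Rle_trans with (sum_n (a n) 0). rewrite sum_O; auto. apply partial_le; auto. }
  assert (Hcol : forall k, exists l, is_series (fun n => a n k) l).
  { intro k. destruct (bounded_series (fun n => a n k) S) as [l [Hl _]].
    - intro; auto.
    - intro N. apply Rle_trans with (sum_n r N). unfold sum_n. apply sum_n_m_le.
      intro n. apply term_le with (u := a n); auto. apply partial_le; auto.
    - exists l; auto. }
  set (c := fun k => Series (fun n => a n k)).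
  assert (Hc : forall k, is_series (fun n => a n k) (c k)).
  { intro k. destruct (Hcol k) as [l Hl]. unfold c. rewrite (is_series_unique _ _ Hl). exact Hl. }
  exists c. split; auto.
  assert (Hcn : forall k, 0 <= c k).
  { intro k. apply Rle_trans with (sum_n (fun n => a n k) 0). rewrite sum_O; auto. apply partial_le; auto. }
  destruct (bounded_series c S Hcn (swap_part a r c S Ha Hr Hc HS)) as [T [HT HTS]].
  assert (HST : S <= T).
  { pose proof (swap_part (fun k n => a n k) c r T (fun k n => Ha n k) Hc Hr HT) as H.
    pose proof (is_lim_seq_le _ _ _ _ H (proj1 (is_series_lim _ _) HS) (is_lim_seq_const T)) as Hle. exact Hle. }
  replace S with T by lra. exact HT.
Qed.

Lemma INR_S1 n : INR (n + 1) = INR n + 1.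
Proof. rewrite plus_INR; simpl; ring. Qed.

Lemma tele_sum N : sum_n (fun n => / INR (n+1) - / INR (n+2)) N = 1 - / INR (N + 2).
Proof.
  induction N.
  - rewrite sum_O. simpl. field.
  - rewrite sum_Sn, IHN. change (plus ?x ?y) with (x + y).
    replace (S N + 1)%nat with (N + 2)%nat by lia. replace (S N + 2)%nat with (N + 3)%nat by lia.
    lra.
Qed.

Lemma tele_series : is_series (fun n => / INR (n+1) - / INR (n+2)) 1.
Proof.
  apply is_series_lim. eapply is_lim_seq_ext. intro N; symmetry; apply tele_sum.
  replace (Finite 1) with (Rbar_minus 1 0) by (simpl; f_equal; ring).
  apply is_lim_seq_minus'. apply is_lim_seq_const.
  apply (is_lim_seq_incr_n (fun N => / INR N) 2).
  replace (Finite 0) with (Rbar_inv p_infty) by reflexivity.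
  apply is_lim_seq_inv. apply is_lim_seq_INR. discriminate.
Qed.

Lemma zeta_ex s : (2 <= s)%nat -> ex_series (fun n => / INR (n + 1) ^ s).
Proof.
  intro Hs.
  apply (ex_series_le (K:=R_AbsRing) (V:=R_CompleteNormedModule) _ (fun n => 2 * (/ INR (n+1) - / INR (n+2)))).
  - intro n. change (norm (/ INR (n + 1) ^ s)) with (Rabs (/ INR (n + 1) ^ s)).
    rewrite !INR_S1. replace (n + 2)%nat with (n + 1 + 1)%nat by lia. rewrite !INR_S1.
    pose proof (pos_INR n) as Hn.
    rewrite Rabs_pos_eq. 2: { left; apply Rinv_0_lt_compat, pow_lt; lra. }
    apply Rle_trans with (/ (INR n + 1) ^ 2).
    + apply Rinv_le_contravar. apply pow_lt; lra. apply Rle_pow; lra || lia.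
    + replace (2 * (/ (INR n + 1) - / (INR n + 1 + 1))) with (2 / ((INR n + 1) * (INR n + 2))) by (field; lra).
      apply Rle_trans with (2 / ((INR n + 1) * (2 * (INR n + 1)))).
      * right. field. lra.
      * unfold Rdiv. apply Rmult_le_compat_l; [lra|]. apply Rinv_le_contravar. nra. nra.
  - eexists. apply (is_series_scal (K:=R_AbsRing) 2 _ _ tele_series).
Qed.

Lemma zeta_series s : (2 <= s)%nat -> is_series (fun n => / INR (n + 1) ^ s) (zeta s).
Proof. intro Hs. unfold zeta. apply Series_correct. apply zeta_ex; auto. Qed.

Lemma zeta_nonneg_term s n : 0 <= / INR (n + 1) ^ s.
Proof. left. apply Rinv_0_lt_compat, pow_lt. rewrite INR_S1; pose proof (pos_INR n); lra. Qed.

Lemma zeta_le2 s : (2 <= s)%nat -> 0 <= zeta s <= zeta 2.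
Proof.
  intro Hs. split.
  - apply Rle_trans with (sum_n (fun n => / INR (n + 1) ^ s) 0).
    rewrite sum_O. apply zeta_nonneg_term. apply partial_le. intro; apply zeta_nonneg_term.
    apply zeta_series; auto.
  - unfold zeta. apply Series_le. 2: apply zeta_ex; lia.
    intro n. split. apply zeta_nonneg_term.
    rewrite INR_S1. pose proof (pos_INR n).
    apply Rinv_le_contravar. apply pow_lt; lra. apply Rle_pow; lra || lia.
Qed.

Definition dq (g : R -> R) (l t : R) : R := if Req_EM_T t 0 then l else (g t - g 0) / t.

Lemma dq_cont0 g l : derivable_pt_lim g 0 l -> continuity_pt (dq g l) 0.
Proof.
  intros Hd eps Heps.
  destruct (Hd eps Heps) as [del Hdel].
  exists del. split. apply (cond_pos del).
  intros x [[_ Hx0] Hx]. simpl in *. unfold R_dist in *.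
  unfold dq. destruct (Req_EM_T 0 0) as [_|C]; [|congruence].
  destruct (Req_EM_T x 0) as [E|_]. subst; congruence.
  specialize (Hdel x (not_eq_sym Hx0)). rewrite Rminus_0_r in Hx.
  replace (0 + x) with x in Hdel by ring. apply Hdel; auto.
Qed.

Lemma dq_cont g l t : t <> 0 -> continuity_pt g t -> continuity_pt (dq g l) t.
Proof.
  intros Ht Hg. apply continuity_pt_filterlim. change (continuous (dq g l) t).
  apply (continuous_ext_loc (dq g l) (fun y => (g y - g 0) / y) t).
  - exists (mkposreal (Rabs t) (Rabs_pos_lt _ Ht)). intros y Hy.
    unfold dq. destruct (Req_EM_T y 0) as [E|_]; [|reflexivity].
    exfalso. subst. cbn in Hy. unfold AbsRing_ball, abs, minus, plus, opp in Hy; simpl in Hy.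
    rewrite Rplus_0_l, Rabs_Ropp in Hy. lra.
  - apply continuity_pt_filterlim. unfold dq. destruct (Req_EM_T t 0); [congruence|].
    apply continuity_pt_div; auto.
    apply continuity_pt_minus; auto. apply continuity_pt_const; intros u v; reflexivity.
    apply derivable_continuous_pt, derivable_pt_id.
Qed.

Lemma dq_eq g l t : t <> 0 -> dq g l t * t = g t - g 0.
Proof. intro Ht. unfold dq. destruct (Req_EM_T t 0); [congruence|]. field; auto. Qed.

Definition sinc := dq sin 1.

Lemma sinc_cont t : continuity_pt sinc t.
Proof.
  destruct (Req_EM_T t 0) as [E|E].
  - subst. apply dq_cont0. replace 1 with (cos 0) by apply cos_0. apply derivable_pt_lim_sin.
  - apply dq_cont; auto. apply continuity_sin.
Qed.

Lemma sinc_eq t : t <> 0 -> t * sinc t = sin t.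
Proof. intro Ht. unfold sinc. rewrite Rmult_comm, dq_eq, sin_0; auto; ring. Qed.

Lemma sinc_pos t : 0 <= t < PI -> 0 < sinc t.
Proof.
  intros Ht. destruct (Req_EM_T t 0) as [E|E].
  - subst. unfold sinc, dq. destruct (Req_EM_T 0 0); [lra|congruence].
  - pose proof (sinc_eq t E). pose proof (sin_gt_0 t ltac:(lra) ltac:(lra)).
    nra.
Qed.

Lemma anti F f a b : (forall t, is_derive F t (f t)) -> (forall t, continuity_pt f t) ->
  is_RInt f a b (F b - F a).
Proof.
  intros HF Hf. apply (is_RInt_derive F f a b).
  intros; apply HF. intros; apply cpt_cont; apply Hf.
Qed.

Lemma anti' F f a b v : (forall t, is_derive F t (f t)) -> (forall t, continuity_pt f t) ->
  F b - F a = v -> is_RInt f a b v.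
Proof. intros H1 H2 H3. rewrite <- H3. apply anti; auto. Qed.

Lemma is_RInt_sum_n (f : nat -> R -> R) (I : nat -> R) a b N :
  (forall n, is_RInt (f n) a b (I n)) ->
  is_RInt (fun t => sum_n (fun n => f n t) N) a b (sum_n I N).
Proof.
  intro H. induction N.
  - rewrite sum_O. eapply is_RInt_ext; [|apply H]. intros; rewrite sum_O; reflexivity.
  - rewrite sum_Sn. eapply is_RInt_ext; [|apply (is_RInt_plus _ _ _ _ _ _ IHN (H (S N)))].
    intros; simpl. rewrite sum_Sn. reflexivity.
Qed.

Lemma sin_nPI n : sin (INR n * PI) = 0.
Proof. apply sin_eq_0_1. exists (Z.of_nat n). rewrite <- INR_IZR_INZ. reflexivity. Qed.

Definition DN N t := / 2 + sum_n (fun n => cos (INR (n+1) * t)) N.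

Lemma DN_id N t : 2 * sin (t/2) * DN N t = sin ((INR N + 3/2) * t).
Proof.
  unfold DN. induction N.
  - rewrite sum_O. simpl. set (u := t/2).
    replace ((0+3/2)*t) with (u + 2*u) by (unfold u; field).
    replace (1*t) with (2*u) by (unfold u; field).
    rewrite sin_plus, cos_2a, sin_2a. pose proof (sin2_cos2 u). unfold Rsqr in *. assert (sin u * (sin u * sin u + cos u * cos u) = sin u * 1) by (rewrite H; ring). nra.
  - rewrite sum_Sn. change (plus ?x ?y) with (x + y).
    replace (2 * sin (t / 2) * (/ 2 + (sum_n (fun n : nat => cos (INR (n + 1) * t)) N + cos (INR (S N + 1) * t))))
      with (2 * sin (t / 2) * (/ 2 + sum_n (fun n : nat => cos (INR (n + 1) * t)) N) + 2 * sin (t/2) * cos (INR (S N + 1) * t)) by ring.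
    rewrite IHN. rewrite S_INR. rewrite INR_S1, S_INR.
    replace ((INR N + 1 + 3 / 2) * t) with ((INR N + 1 + 1) * t + t/2) by field.
    replace ((INR N + 3 / 2) * t) with ((INR N + 1 + 1) * t - t/2) by field.
    rewrite sin_plus, sin_minus. ring.
Qed.

Lemma int_cos_n n : is_RInt (fun t => cos (INR (n+1) * t)) 0 PI 0.
Proof.
  assert (Hn : INR (n+1) <> 0) by (rewrite INR_S1; pose proof (pos_INR n); lra).
  apply (anti' (fun t => sin (INR (n+1) * t) / INR (n+1))).
  - intro t. auto_derive; auto. field; auto.
  - intro t. apply cpt_of_deriv. auto_derive; auto.
  - rewrite Rmult_0_r, sin_0, sin_nPI. field; auto.
Qed.

Lemma int_DN N : is_RInt (DN N) 0 PI (PI / 2).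
Proof.
  unfold DN. replace (PI / 2) with (plus ((PI - 0) * / 2) (sum_n (fun _ => 0) N)).
  2: { rewrite sum_n_const. change (plus ?x ?y) with (x + y). simpl. field. }
  apply (is_RInt_plus (fun _ => / 2) (fun t => sum_n (fun n => cos (INR (n+1) * t)) N)).
  - apply (is_RInt_const 0 PI (/2)).
  - apply (is_RInt_sum_n (fun n t => cos (INR (n+1) * t)) (fun _ => 0)). intro; apply int_cos_n.
Qed.

Lemma int_g_cos w m : w^2 <> m^2 -> m <> 0 -> sin (m*PI) = 0 ->
  is_RInt (fun t => cos (w*(PI - t)) * cos (m*t)) 0 PI (w * sin (w*PI) / (w^2 - m^2)).
Proof.
  intros Hwm Hm Hs.
  assert (Hd : w^2 - m^2 <> 0) by lra.
  apply (anti' (fun t => (- w / (w^2 - m^2)) * sin (w*(PI - t)) * cos (m*t)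
                        + (- m / (w^2 - m^2)) * cos (w*(PI - t)) * sin (m*t))).
  - intro t. auto_derive; auto. replace (PI + - t) with (PI - t) by ring. replace (w * (w * 1) - m * (m * 1)) with (w^2 - m^2) by ring. field; auto.
  - intro t. apply cpt_of_deriv. auto_derive; auto.
  - rewrite Rminus_diag, Rminus_0_r, !Rmult_0_r, sin_0, cos_0, Hs. field; auto.
Qed.

Lemma int_g w : w <> 0 -> is_RInt (fun t => cos (w*(PI - t))) 0 PI (sin (w*PI) / w).
Proof.
  intro Hw. apply (anti' (fun t => - sin (w*(PI - t)) / w)).
  - intro t. auto_derive; auto. replace (PI + - t) with (PI - t) by ring. field; auto.
  - intro t. apply cpt_of_deriv. auto_derive; auto.
  - rewrite Rminus_diag, Rminus_0_r, Rmult_0_r, sin_0. field; auto.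
Qed.

Lemma int_gDN w N : 0 < w < 1 ->
  is_RInt (fun t => cos (w*(PI - t)) * DN N t) 0 PI
    (sin (w*PI) / (2*w) + sum_n (fun n => w * sin (w*PI) / (w^2 - INR (n+1)^2)) N).
Proof.
  intro Hw.
  apply is_RInt_ext with (f := fun t => plus (/2 * cos (w*(PI - t)))
     (sum_n (fun n => cos (w*(PI - t)) * cos (INR (n+1) * t)) N)).
  { intros t _. unfold DN. rewrite Rmult_plus_distr_l. change (plus ?x ?y) with (x + y).
    f_equal. ring. rewrite <- (sum_n_mult_l (K:=R_Ring)). reflexivity. }
  apply (is_RInt_plus (fun t => /2 * cos (w*(PI - t))) (fun t => sum_n (fun n => cos (w*(PI - t)) * cos (INR (n+1) * t)) N) 0 PI (sin (w*PI) / (2*w)) (sum_n (fun n => w * sin (w*PI) / (w^2 - INR (n+1)^2)) N)).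
  - replace (sin (w * PI) / (2 * w)) with (scal (/2) (sin (w*PI) / w)).
    apply (is_RInt_scal (fun t => cos (w*(PI-t))) 0 PI (/2) (sin (w*PI)/w)). apply int_g. lra.
    cut (/2 * (sin (w*PI) / w) = sin (w*PI) / (2*w)). intro HH; exact HH. field. lra.
  - apply (is_RInt_sum_n (fun n t => cos (w*(PI - t)) * cos (INR (n+1) * t))).
    intro n. apply int_g_cos.
    + rewrite INR_S1. pose proof (pos_INR n). nra.
    + rewrite INR_S1. pose proof (pos_INR n). lra.
    + apply sin_nPI.
Qed.

Lemma RL_to_seq (F : R -> R) c0 :
  (forall eps, 0 < eps -> exists M0, forall M, M0 <= M -> Rabs (F M) < eps) ->
  is_lim_seq (fun N => F (INR N + c0)) 0.
Proof.
  intro H. apply is_lim_seq_spec. intro eps.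
  destruct (H eps (cond_pos eps)) as [M0 HM0].
  destruct (INR_unbounded (M0 - c0)) as [N0 HN0].
  exists N0. intros n Hn. rewrite Rminus_0_r. apply HM0.
  apply le_INR in Hn. lra.
Qed.

Lemma sinc_half_pos t : 0 <= t < 2 * PI -> 0 < sinc (t/2).
Proof. intro; apply sinc_pos; lra. Qed.

Lemma sinc_half_cont t : continuity_pt (fun t => sinc (t/2)) t.
Proof.
  apply continuity_pt_comp with (f1 := fun t => t/2) (f2 := sinc).
  apply cpt_of_deriv; auto_derive; auto. apply sinc_cont.
Qed.

Lemma two_sin_half t : t <> 0 -> 2 * sin (t/2) = t * sinc (t/2).
Proof.
  intro Ht. rewrite <- (sinc_eq (t/2)) by lra. field.
Qed.

Lemma cot_pf w : 0 < w < 1 ->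
  is_series (fun n => 2*w/(w^2 - INR (n+1)^2)) (PI * cos (PI*w) / sin (PI*w) - 1/w).
Proof.
  intro Hw.
  pose proof PI_RGT_0 as HPI.
  set (g := fun t => cos (w*(PI - t))).
  set (l := w * sin (w*PI)).
  assert (Hgd : derivable_pt_lim g 0 l).
  { apply is_derive_Reals. unfold g, l. auto_derive; auto.
    replace (PI + - 0) with PI by ring. ring. }
  set (psi := fun t => dq g l t / sinc (t/2)).
  assert (Hpsi : forall t, 0 <= t <= PI -> continuity_pt psi t).
  { intros t Ht. unfold psi. apply continuity_pt_div.
    - destruct (Req_EM_T t 0) as [E|E].
      + subst. apply dq_cont0; auto.
      + apply dq_cont; auto. apply cpt_of_deriv. unfold g. auto_derive; auto.
    - apply sinc_half_cont.
    - apply Rgt_not_eq, sinc_half_pos. lra. }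
  set (c := - (PI/2)).
  set (Rn := fun M => RInt (fun t => psi t * cos (M * t + c)) 0 PI).
  set (Q := fun N => sin (w*PI) / (2*w) + sum_n (fun n => w * sin (w*PI) / (w^2 - INR (n+1)^2)) N).
  assert (HQ : forall N, Q N = g 0 * (PI/2) + Rn (INR N + 3/2)).
  { intro N.
    assert (H1 : is_RInt (fun t => g t * DN N t) 0 PI (Q N)) by (apply int_gDN; auto).
    assert (H2 : is_RInt (fun t => g t * DN N t) 0 PI (g 0 * (PI/2) + Rn (INR N + 3/2))).
    { apply is_RInt_ext with (f := fun t => plus (scal (g 0) (DN N t)) (psi t * cos ((INR N + 3/2) * t + c))).
      - intros t Ht. rewrite Rmin_left in Ht by lra. rewrite Rmax_right in Ht by lra.
        change (plus ?x ?y) with (x + y). change (scal ?x ?y) with (x * y).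
        match goal with |- ?a = ?b => change (@eq R a b) end.
        unfold c. replace ((INR N + 3 / 2) * t + - (PI / 2)) with (- (PI/2 - (INR N + 3/2) * t)) by ring.
        rewrite cos_neg, cos_shift, <- DN_id.
        assert (Hs : 0 < sinc (t/2)) by (apply sinc_half_pos; lra).
        assert (Ht0 : t <> 0) by lra.
        rewrite (two_sin_half t Ht0). unfold psi.
        replace (dq g l t / sinc (t / 2) * (t * sinc (t / 2) * DN N t)) with ((dq g l t * t) * DN N t)
          by (field; lra).
        rewrite dq_eq by auto. ring.
      - apply (is_RInt_plus (fun t => scal (g 0) (DN N t)) (fun t => psi t * cos ((INR N + 3/2) * t + c)) 0 PI (g 0 * (PI/2)) (Rn (INR N + 3/2))).
        + apply (is_RInt_scal (DN N) 0 PI (g 0) (PI/2)). apply int_DN.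
        + unfold Rn. apply (RInt_correct (V:=R_CompleteNormedModule)). apply ex_RInt_cpt.
          intros t Ht. rewrite Rmin_left in Ht by lra. rewrite Rmax_right in Ht by lra.
          apply cpt_phicos. apply Hpsi; auto. }
    rewrite <- (is_RInt_unique _ _ _ _ H1). apply is_RInt_unique. exact H2. }
  assert (HRn : is_lim_seq (fun N => Rn (INR N + 3/2)) 0).
  { apply RL_to_seq. unfold Rn. apply RL_main; auto. }
  assert (HQl : is_lim_seq Q (g 0 * (PI/2))).
  { apply is_lim_seq_ext with (u := fun N => g 0 * (PI/2) + Rn (INR N + 3/2)).
    intro N; rewrite HQ; reflexivity.
    replace (Finite (g 0 * (PI/2))) with (Rbar_plus (g 0 * (PI/2)) 0) by (simpl; f_equal; ring).
    apply is_lim_seq_plus'. apply is_lim_seq_const. exact HRn. }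
  assert (Hs : 0 < sin (w * PI)) by (apply sin_gt_0; nra).
  apply is_series_lim.
  apply is_lim_seq_ext with (u := fun N => (2 / sin (w*PI)) * (Q N - sin (w*PI) / (2*w))).
  { intro N. unfold Q. assert (E : forall a b : R, a + b - a = b) by (intros; ring). rewrite E.
    rewrite <- (sum_n_mult_l (K:=R_Ring)). apply sum_n_ext. intro n.
    change (mult ?x ?y) with (x * y).
    assert (w ^ 2 - INR (n + 1) ^ 2 <> 0).
    { rewrite INR_S1. pose proof (pos_INR n). nra. }
    match goal with |- ?a = ?b => change (@eq R a b) end. field. lra. }
  replace (PI * cos (PI * w) / sin (PI * w) - 1 / w) with ((2 / sin (w*PI)) * (g 0 * (PI/2) - sin (w*PI) / (2*w))).
  2: { unfold g. rewrite Rminus_0_r. rewrite (Rmult_comm PI w). field. lra. }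
  apply (is_lim_seq_scal_l _ _ (g 0 * (PI/2) - sin (w*PI) / (2*w))).
  apply is_lim_seq_minus'. exact HQl. apply is_lim_seq_const.
Qed.

Lemma geom1 q : 0 <= q < 1 -> is_series (fun k => q ^ (k+1)) (q / (1 - q)).
Proof.
  intro Hq. assert (H := is_series_geom q ltac:(rewrite Rabs_pos_eq; lra)).
  apply (is_series_scal (K:=R_AbsRing) q) in H.
  eapply is_series_ext; [|replace (q / (1 - q)) with (scal q (/ (1 - q))); [exact H|]].
  - intro n. change (scal q (q ^ n)) with (q * q ^ n). rewrite Nat.add_comm. simpl. reflexivity.
  - change (scal q (/ (1 - q))) with (q * / (1 - q)). reflexivity.
Qed.

Lemma pow_split w m k : m <> 0 -> (w^2 / m^2) ^ (k+1) = w ^ (2*(k+1)) * / m ^ (2*(k+1)).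
Proof.
  intro Hm. unfold Rdiv. rewrite Rpow_mult_distr, pow_inv, !pow_mult. reflexivity.
Qed.

Lemma c_series t : 0 < t < 2*PI ->
  is_series (fun k => zeta (2*(k+1)) * (t/(2*PI))^(2*(k+1))) (1/2 - t * cos (t/2) / (4 * sin (t/2))).
Proof.
  intro Ht. pose proof PI_RGT_0 as HPI.
  set (w := t / (2*PI)).
  assert (Hw : 0 < w < 1).
  { unfold w. split. apply Rdiv_lt_0_compat; lra. apply Rmult_lt_reg_r with (2*PI). lra.
    unfold Rdiv. rewrite Rmult_assoc, Rinv_l; lra. }
  assert (HPw : PI * w = t / 2) by (unfold w; field; lra).
  assert (Hst : 0 < sin (t/2)) by (apply sin_gt_0; lra).
  pose proof (cot_pf w Hw) as Hpf.
  apply (is_series_scal (K:=R_AbsRing) (- w / 2)) in Hpf.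
  set (S := 1/2 - t * cos (t/2) / (4 * sin (t/2))).
  assert (HS : is_series (fun n => w^2 / (INR (n+1)^2 - w^2)) S).
  { eapply is_series_ext; [|replace S with (scal (- w / 2) (PI * cos (PI * w) / sin (PI * w) - 1 / w)); [exact Hpf|]].
    - intro n. change (scal ?x ?y) with (x * y).
      assert (w ^ 2 - INR (n + 1) ^ 2 <> 0).
      { rewrite INR_S1. pose proof (pos_INR n). nra. }
      toR. cbv beta. field. split; lra.
    - change (scal ?x ?y) with (x * y). unfold S. rewrite HPw.
      toR. unfold w. field. split; lra. }
  set (a := fun n k => (w^2 / INR (n+1)^2) ^ (k+1)).
  assert (Hm : forall n, 0 < INR (n+1)) by (intro n; rewrite INR_S1; pose proof (pos_INR n); lra).
  assert (Ha : forall n k, 0 <= a n k).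
  { intros n k. unfold a. apply pow_le. apply Rmult_le_pos. nra. left; apply Rinv_0_lt_compat.
    specialize (Hm n); nra. }
  assert (Hrow : forall n, is_series (a n) (w^2 / (INR (n+1)^2 - w^2))).
  { intro n. unfold a. specialize (Hm n).
    replace (w ^ 2 / (INR (n + 1) ^ 2 - w ^ 2)) with ((w^2 / INR (n+1)^2) / (1 - w^2 / INR (n+1)^2)).
    apply geom1. split. apply Rmult_le_pos. nra. left; apply Rinv_0_lt_compat; nra.
    assert (Hm1 : 1 <= INR (n+1)) by (rewrite INR_S1; pose proof (pos_INR n); lra).
    apply Rmult_lt_reg_r with (INR (n+1)^2). apply pow_lt; lra.
    replace (w^2 / INR (n+1)^2 * INR (n+1)^2) with (w^2) by (field; apply Rgt_not_eq; lra). nra.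
    assert (Hm1 : 1 <= INR (n+1)) by (rewrite INR_S1; pose proof (pos_INR n); lra).
    assert (INR (n+1)^2 - w^2 > 0) by nra.
    field. split; apply Rgt_not_eq; nra. }
  destruct (swap_nonneg a _ S Ha Hrow HS) as [c [Hc HcS]].
  eapply is_series_ext; [|exact HcS].
  intro k.
  assert (Hk : is_series (fun n => a n k) (w ^ (2*(k+1)) * zeta (2*(k+1)))).
  { pose proof (zeta_series (2*(k+1)) ltac:(lia)) as Hz.
    apply (is_series_scal (K:=R_AbsRing) (w ^ (2*(k+1)))) in Hz.
    eapply is_series_ext; [|exact Hz]. intro n. change (scal ?x ?y) with (x * y).
    unfold a. rewrite pow_split. reflexivity. specialize (Hm n); lra. }
  rewrite <- (is_series_unique _ _ (Hc k)), (is_series_unique _ _ Hk). toR. ring.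
Qed.

Lemma RL_ext (phi f : R -> R) a b : a < b ->
  (forall t, a <= t <= b -> continuity_pt phi t) ->
  (forall t, a < t < b -> f t = phi t) ->
  (forall M, ex_RInt (fun t => f t * cos (M*t)) a b) /\
  (forall eps, 0 < eps -> exists M0, forall M, M0 <= M ->
     Rabs (RInt (fun t => f t * cos (M*t)) a b) < eps).
Proof.
  intros Hab Hc Hf.
  assert (Hex : forall M, ex_RInt (fun t => phi t * cos (M*t + 0)) a b).
  { intro M. apply ex_RInt_cpt. intros t Ht. rewrite Rmin_left in Ht by lra.
    rewrite Rmax_right in Ht by lra. apply cpt_phicos. apply Hc; auto. }
  assert (Heq : forall M, RInt (fun t => f t * cos (M*t)) a b = RInt (fun t => phi t * cos (M*t + 0)) a b).
  { intro M. apply RInt_ext. intros t Ht. rewrite Rmin_left in Ht by lra.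
    rewrite Rmax_right in Ht by lra. rewrite Hf by auto. rewrite Rplus_0_r. reflexivity. }
  split.
  - intro M. apply (ex_RInt_ext (fun t => phi t * cos (M*t + 0))).
    intros t Ht. rewrite Rmin_left in Ht by lra.
    rewrite Rmax_right in Ht by lra. rewrite Hf by auto. rewrite Rplus_0_r. reflexivity.
    apply Hex.
  - intros eps Heps. destruct (RL_main phi a b 0 Hab Hc eps Heps) as [M0 HM0].
    exists M0. intros M HM. rewrite Heq. apply HM0; auto.
Qed.

Definition W x t := (x - t) * t / (4 * sin (t/2)).

Lemma W_eq1 x t : 0 < t < 2*PI -> W x t = (x - t) / (2 * sinc (t/2)).
Proof.
  intro Ht. unfold W. pose proof PI_RGT_0.
  assert (Hs : 0 < sin (t/2)) by (apply sin_gt_0; lra).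
  assert (Hc : 0 < sinc (t/2)) by (apply sinc_half_pos; lra).
  rewrite <- (sinc_eq (t/2)) in Hs |- * by lra. field. neq0.
Qed.

Lemma W_eq2 x t : 0 < t < 2*PI -> W x t = (x - t) * t / (2 * (2*PI - t) * sinc ((2*PI - t)/2)).
Proof.
  intro Ht. unfold W. pose proof PI_RGT_0.
  assert (E : sin (t/2) = sin ((2*PI - t)/2)).
  { replace ((2*PI - t)/2) with (PI - t/2) by field. rewrite sin_PI_x. reflexivity. }
  assert (Hs : 0 < sin (t/2)) by (apply sin_gt_0; lra).
  rewrite E in Hs |- *. rewrite <- (sinc_eq ((2*PI - t)/2)) in Hs |- * by lra.
  field. neq0.
Qed.

Lemma RLW x : 0 < x <= 2*PI ->
  (forall M, ex_RInt (fun t => W x t * cos (M*t)) 0 x) /\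
  (forall eps, 0 < eps -> exists M0, forall M, M0 <= M ->
     Rabs (RInt (fun t => W x t * cos (M*t)) 0 x) < eps).
Proof.
  intro Hx. pose proof PI_RGT_0 as HPI.
  destruct (Rle_lt_or_eq_dec x (2*PI) (proj2 Hx)) as [Hlt|Heq].
  - apply (RL_ext (fun t => (x - t) / (2 * sinc (t/2)))). lra.
    + intros t Ht. apply continuity_pt_div.
      apply cpt_of_deriv; auto_derive; auto.
      apply continuity_pt_mult. apply continuity_pt_const; intros u v; reflexivity.
      apply sinc_half_cont.
      apply Rgt_not_eq. assert (0 < sinc (t/2)) by (apply sinc_half_pos; lra). lra.
    + intros t Ht. apply W_eq1. lra.
  - subst x.
    destruct (RL_ext (fun t => (2*PI - t) / (2 * sinc (t/2))) (W (2*PI)) 0 PI) as [E1 L1].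
    { lra. }
    { intros t Ht. apply continuity_pt_div.
      apply cpt_of_deriv; auto_derive; auto.
      apply continuity_pt_mult. apply continuity_pt_const; intros u v; reflexivity.
      apply sinc_half_cont.
      apply Rgt_not_eq. assert (0 < sinc (t/2)) by (apply sinc_half_pos; lra). lra. }
    { intros t Ht. apply W_eq1. lra. }
    destruct (RL_ext (fun t => t / (2 * sinc ((2*PI - t)/2))) (W (2*PI)) PI (2*PI)) as [E2 L2].
    { lra. }
    { intros t Ht. apply continuity_pt_div.
      apply cpt_of_deriv; auto_derive; auto.
      apply continuity_pt_mult. apply continuity_pt_const; intros u v; reflexivity.
      apply continuity_pt_comp with (f1 := fun t => (2*PI - t)/2) (f2 := sinc).
      apply cpt_of_deriv; auto_derive; auto. apply sinc_cont.
      apply Rgt_not_eq. assert (0 < sinc ((2*PI - t)/2)) by (apply sinc_pos; lra). lra. }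
    { intros t Ht. rewrite W_eq2 by lra. field. 
      assert (0 < sinc ((2*PI - t)/2)) by (apply sinc_pos; lra). neq0. }
    split.
    + intro M. apply ex_RInt_Chasles with PI; auto.
    + intros eps Heps. destruct (L1 (eps/2) ltac:(lra)) as [M1 HM1].
      destruct (L2 (eps/2) ltac:(lra)) as [M2 HM2].
      exists (Rmax M1 M2). intros M HM.
      rewrite <- (RInt_Chasles _ 0 PI (2*PI)) by auto.
      change (plus ?a ?b) with (a + b).
      eapply Rle_lt_trans. apply Rabs_triang.
      assert (Rabs (RInt (fun t : R => W (2 * PI) t * cos (M * t)) 0 PI) < eps/2)
        by (apply HM1; eapply Rle_trans; [apply Rmax_l|exact HM]).
      assert (Rabs (RInt (fun t : R => W (2 * PI) t * cos (M * t)) PI (2*PI)) < eps/2)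
        by (apply HM2; eapply Rle_trans; [apply Rmax_r|exact HM]).
      lra.
Qed.

Lemma SN_id N t : 2 * sin (t/2) * sum_n (fun n => sin (INR (n+1) * t)) N
   = cos (t/2) - cos ((INR N + 3/2) * t).
Proof.
  induction N.
  - rewrite sum_O. simpl. set (u := t/2).
    replace ((0+3/2)*t) with (u + 2*u) by (unfold u; field).
    replace (1*t) with (2*u) by (unfold u; field).
    rewrite cos_plus, cos_2a, sin_2a. pose proof (sin2_cos2 u) as H. unfold Rsqr in H.
    assert (cos u * (sin u * sin u + cos u * cos u) = cos u * 1) by (rewrite H; ring). nra.
  - rewrite sum_Sn. change (plus ?x ?y) with (x + y).
    rewrite Rmult_plus_distr_l, IHN. rewrite S_INR, INR_S1, S_INR.
    replace ((INR N + 1 + 3 / 2) * t) with ((INR N + 1 + 1) * t + t/2) by field.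
    replace ((INR N + 3 / 2) * t) with ((INR N + 1 + 1) * t - t/2) by field.
    rewrite cos_plus, cos_minus. ring.
Qed.

Lemma Cl_term_series x :
  is_series (fun n => (cos (INR (n+1) * x) - 1) / INR (n+1)^3 + x/2 * (sin (INR (n+1) * x) / INR (n+1)^2))
    (Cl3 x - zeta 3 + x/2 * Cl2 x).
Proof.
  assert (Hm : forall n, 0 < INR (n+1)) by (intro n; rewrite INR_S1; pose proof (pos_INR n); lra).
  assert (E3 : ex_series (fun n => cos (INR (n+1) * x) / INR (n+1)^3)).
  { apply (ex_series_le (K:=R_AbsRing) (V:=R_CompleteNormedModule) _ (fun n => / INR (n+1)^3)).
    2: apply zeta_ex; lia.
    intro n. change (norm ?a) with (Rabs a). unfold Rdiv. rewrite Rabs_mult.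
    rewrite (Rabs_pos_eq (/ _)). 2: apply zeta_nonneg_term.
    pose proof (zeta_nonneg_term 3 n). pose proof (abs_cos_le1 (INR (n+1) * x)).
    pose proof (Rabs_pos (cos (INR (n + 1) * x))). nra. }
  assert (E2 : ex_series (fun n => sin (INR (n+1) * x) / INR (n+1)^2)).
  { apply (ex_series_le (K:=R_AbsRing) (V:=R_CompleteNormedModule) _ (fun n => / INR (n+1)^2)).
    2: apply zeta_ex; lia.
    intro n. change (norm ?a) with (Rabs a). unfold Rdiv. rewrite Rabs_mult.
    rewrite (Rabs_pos_eq (/ _)). 2: apply zeta_nonneg_term.
    pose proof (zeta_nonneg_term 2 n). pose proof (abs_sin_le1 (INR (n+1) * x)).
    pose proof (Rabs_pos (sin (INR (n + 1) * x))). nra. }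
  pose proof (Series_correct _ E3) as H3. pose proof (Series_correct _ E2) as H2.
  pose proof (zeta_series 3 ltac:(lia)) as Z3.
  pose proof (is_series_minus _ _ _ _ H3 Z3) as H1.
  pose proof (is_series_scal (K:=R_AbsRing) (x/2) _ _ H2) as H4.
  pose proof (is_series_plus _ _ _ _ H1 H4) as H5.
  eapply is_series_ext; [|exact H5].
  intro n. cbv beta. change (plus ?a ?b) with (a + b). change (opp ?a) with (- a). change (scal ?a ?b) with (a * b).
  simplR. toR. specialize (Hm n). field. neq0.

Qed.

Lemma int_term x m : m <> 0 ->
  is_RInt (fun t => - (x - t) * (t/2) * sin (m * t)) 0 x
    ((cos (m * x) - 1) / m^3 + x/2 * (sin (m * x) / m^2)).
Proof.
  intro Hm.
  apply (anti' (fun t => - / 2 * (- (x*t - t^2) * cos (m*t) / m + (x - 2*t) * sin (m*t) / m^2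
                                 - 2 * cos (m*t) / m^3))).
  - intro t. auto_derive; auto. field; auto.
  - intro t. apply cpt_of_deriv; auto_derive; auto.
  - rewrite !Rmult_0_r, sin_0, cos_0. field; auto.
Qed.

Definition Hf x := x^2/4 + (Cl3 x - zeta 3 + x/2 * Cl2 x).

Lemma stepA x : 0 < x <= 2*PI ->
  is_RInt (fun t => (x - t)/2 - W x t * cos (t/2)) 0 x (Hf x).
Proof.
  intro Hx. pose proof PI_RGT_0 as HPI.
  destruct (RLW x Hx) as [Wex WL].
  set (h := fun n => (cos (INR (n+1) * x) - 1) / INR (n+1)^3 + x/2 * (sin (INR (n+1) * x) / INR (n+1)^2)).
  set (A := RInt (fun t => W x t * cos (/2 * t)) 0 x).
  set (RW := fun M => RInt (fun t => W x t * cos (M * t)) 0 x).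
  assert (HN : forall N, sum_n h N = - A + RW (INR N + 3/2)).
  { intro N.
    assert (H1 : is_RInt (fun t => sum_n (fun n => - (x - t) * (t/2) * sin (INR (n+1) * t)) N) 0 x (sum_n h N)).
    { apply (is_RInt_sum_n (fun n t => - (x - t) * (t/2) * sin (INR (n+1) * t))).
      intro n. apply int_term. rewrite INR_S1; pose proof (pos_INR n); lra. }
    assert (H2 : is_RInt (fun t => sum_n (fun n => - (x - t) * (t/2) * sin (INR (n+1) * t)) N) 0 x (- A + RW (INR N + 3/2))).
    { apply is_RInt_ext with (f := fun t => plus (opp (W x t * cos (/2 * t))) (W x t * cos ((INR N + 3/2) * t))).
      - intros t Ht. rewrite Rmin_left in Ht by lra. rewrite Rmax_right in Ht by lra.
        change (plus ?a ?b) with (a + b). change (opp ?a) with (- a). toR.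
        assert (Esum : sum_n (fun n => - (x - t) * (t/2) * sin (INR (n+1) * t)) N = - (x - t) * (t/2) * sum_n (fun n => sin (INR (n+1) * t)) N).
        { exact (sum_n_mult_l (K:=R_Ring) (-(x-t)*(t/2)) (fun n => sin (INR (n+1)*t)) N). }
        rewrite Esum.
        assert (Hs : 0 < sin (t/2)) by (apply sin_gt_0; lra).
        replace (- (x - t) * (t / 2) * sum_n (fun n : nat => sin (INR (n + 1) * t)) N)
          with (- (x - t) * t / (4 * sin (t/2)) * (2 * sin (t/2) * sum_n (fun n : nat => sin (INR (n + 1) * t)) N))
          by (field; neq0).
        rewrite SN_id. unfold W. replace (/2 * t) with (t/2) by field. field. neq0.
      - apply (is_RInt_plus (V:=R_NormedModule) (fun t => opp (W x t * cos (/2*t))) (fun t => W x t * cos ((INR N + 3/2)*t)) 0 x (opp A) (RW (INR N + 3/2))).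
        + apply (is_RInt_opp (V:=R_NormedModule) (fun t => W x t * cos (/2*t)) 0 x A). unfold A. apply (RInt_correct (V:=R_CompleteNormedModule)). apply Wex.
        + unfold RW. apply (RInt_correct (V:=R_CompleteNormedModule)). apply Wex. }
    rewrite <- (is_RInt_unique _ _ _ _ H1). apply is_RInt_unique. exact H2. }
  assert (Hlim : is_lim_seq (fun N => - A + RW (INR N + 3/2)) (- A)).
  { replace (Finite (- A)) with (Rbar_plus (- A) 0) by (simpl; f_equal; ring).
    apply is_lim_seq_plus'. apply is_lim_seq_const. apply RL_to_seq. exact WL. }
  assert (HS : Cl3 x - zeta 3 + x/2 * Cl2 x = - A).
  { pose proof (proj1 (is_series_lim _ _) (Cl_term_series x)) as Hc.
    apply (is_lim_seq_ext _ (fun N => - A + RW (INR N + 3/2))) in Hc. 2: { intro; apply HN. }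
    pose proof (is_lim_seq_unique _ _ Hc) as U1. pose proof (is_lim_seq_unique _ _ Hlim) as U2.
    rewrite U1 in U2. injection U2. auto. }
  unfold Hf. rewrite HS.
  apply (is_RInt_minus (fun t => (x - t)/2) (fun t => W x t * cos (t/2)) 0 x (x^2/4) A).
  - apply (anti' (fun t => (x*t - t^2/2)/2)).
    + intro t. auto_derive; auto. field.
    + intro t. apply cpt_of_deriv; auto_derive; auto.
    + field.
  - eapply is_RInt_ext. 2: { unfold A. apply (RInt_correct (V:=R_CompleteNormedModule)). apply Wex. }
    intros. replace (x0/2) with (/2 * x0) by field. reflexivity.
Qed.

Lemma series_le a b la lb : (forall n, a n <= b n) -> is_series a la -> is_series b lb -> la <= lb.
Proof.
  intros H Ha Hb.
  assert (Hs : forall N, sum_n a N <= sum_n b N) by (intro; apply sum_n_m_le; auto).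
  pose proof (is_lim_seq_le _ _ _ _ Hs (proj1 (is_series_lim _ _) Ha) (proj1 (is_series_lim _ _) Hb)) as Hle.
  exact Hle.
Qed.

Lemma tail_series (c : nat -> R) (C : R) K : is_series c C -> is_series (fun k => c (S K + k)%nat) (C - sum_n c K).
Proof.
  intro H. apply (is_series_incr_n c (S K)). lia. change (pred (S K)) with K.

  match goal with |- is_series _ ?v => replace v with C; [exact H|] end. simplR. toR. change (@sum_n (NormedModule.AbelianMonoid R_AbsRing R_NormedModule) c K) with (@sum_n R_AbelianMonoid c K). ring.
Qed.

Lemma int_pow_lin x n c : 0 < x ->
  is_RInt (fun t => c * (t/(2*PI))^n) 0 x (c * (x/(2*PI))^n * x / (INR n + 1)).
Proof.
  intro Hx. pose proof PI_RGT_0.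
  apply (anti' (fun t => c * (t/(2*PI))^n * t / (INR n + 1))).
  - intro t. pose proof (pos_INR n). auto_derive; auto. unfold Rdiv. destruct n.
    simpl. field. neq0.
    simpl pred. rewrite S_INR. pose proof (pos_INR n). simpl pow. field. neq0.
  - intro t. apply cpt_of_deriv; auto_derive; auto.
  - rewrite Rmult_0_r. unfold Rdiv. rewrite Rmult_0_l. ring.
Qed.

Lemma int_poly x m c : 0 < x ->
  is_RInt (fun t => (x - t) * (c * (t/(2*PI))^m)) 0 x
    (c * (x/(2*PI))^m * x^2 / ((INR m + 1) * (INR m + 2))).
Proof.
  intro Hx. pose proof PI_RGT_0. pose proof (pos_INR m).
  pose proof (int_pow_lin x m (x * c) Hx) as H1.
  pose proof (int_pow_lin x (S m) (2 * PI * c) Hx) as H2.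
  pose proof (is_RInt_minus _ _ _ _ _ _ H1 H2) as H3.
  eapply is_RInt_ext; [| match type of H3 with is_RInt _ _ _ ?v => replace v with (c * (x/(2*PI))^m * x^2 / ((INR m + 1) * (INR m + 2))) in H3; [exact H3|] end].
  - intros t _. simplR. toR. simpl pow. field. neq0.
  - simplR. toR. simpl pow. rewrite S_INR. field. neq0.
Qed.

Definition Cs t := 1/2 - t * cos (t/2) / (4 * sin (t/2)).
Definition ck t k := zeta (2*(k+1)) * (t/(2*PI))^(2*(k+1)).
Definition Tk x k := zeta (2*(k+1)) * (x/(2*PI))^(2*(k+1)) * x^2 / ((INR (2*(k+1)) + 1) * (INR (2*(k+1)) + 2)).

Lemma tail_bound t K : 0 < t < 2*PI ->
  0 <= Cs t - sum_n (ck t) K <= zeta 2 * (t/(2*PI))^(2*K+4) / (1 - (t/(2*PI))^2).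
Proof.
  intro Ht. pose proof PI_RGT_0.
  set (r := t/(2*PI)).
  assert (Hr : 0 < r < 1).
  { unfold r. split. apply Rdiv_lt_0_compat; lra. apply Rmult_lt_reg_r with (2*PI). lra.
    unfold Rdiv. rewrite Rmult_assoc, Rinv_l; lra. }
  pose proof (tail_series _ _ K (c_series t Ht)) as HT.
  change (1/2 - t * cos (t/2) / (4 * sin (t/2))) with (Cs t) in HT.
  assert (Hck : forall k, 0 <= ck t k).
  { intro k. unfold ck. apply Rmult_le_pos. apply zeta_le2; lia. apply pow_le. fold r. lra. }
  split.
  - apply Rle_trans with (sum_n (fun k => ck t (S K + k)%nat) 0).
    + apply sum_n_nonneg. intro; apply Hck.
    + apply partial_le. intro; apply Hck. exact HT.
  - assert (HG : is_series (fun k => zeta 2 * r^(2*K+4) * (r^2)^k) (zeta 2 * r^(2*K+4) / (1 - r^2))).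
    { pose proof (is_series_geom (r^2) ltac:(rewrite Rabs_pos_eq; nra)) as G.
      pose proof (is_series_scal (K:=R_AbsRing) (zeta 2 * r^(2*K+4)) _ _ G) as G2.
      eapply is_series_ext; [|match type of G2 with is_series _ ?v => replace v with (zeta 2 * r^(2*K+4) / (1 - r^2)) in G2; [exact G2|] end].
      + intro n. simplR. reflexivity.
      + simplR. toR. field. neq0. }
    refine (series_le _ _ _ _ _ HT HG). intro k. unfold ck. fold r.
    replace (2 * (S K + k + 1))%nat with ((2*K+4) + 2*k)%nat by lia.
    rewrite pow_add, pow_mult.
    assert (0 <= r^(2*K+4)) by (apply pow_le; lra).
    assert (0 <= (r^2)^k) by (apply pow_le; nra).
    pose proof (zeta_le2 (2*K+4+2*k) ltac:(lia)).
    assert (0 <= r ^ (2 * K + 4) * (r ^ 2) ^ k) by (apply Rmult_le_pos; auto).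
    nra.
Qed.

Lemma inv_INR_S_lim : is_lim_seq (fun K => / INR (K + 1)) 0.
Proof.
  apply (is_lim_seq_incr_n (fun N => / INR N) 1).
  replace (Finite 0) with (Rbar_inv p_infty) by reflexivity.
  apply is_lim_seq_inv. apply is_lim_seq_INR. discriminate.
Qed.

Lemma stepC x : 0 < x <= 2*PI -> is_series (Tk x) (Hf x).
Proof.
  intro Hx. pose proof PI_RGT_0 as HPI.
  set (g := fun t => (x - t)/2 - W x t * cos (t/2)).
  assert (Hg : is_RInt g 0 x (Hf x)) by (apply stepA; auto).
  set (P := fun K t => (x - t) * sum_n (ck t) K).
  assert (HP : forall K, is_RInt (P K) 0 x (sum_n (Tk x) K)).
  { intro K. unfold P.
    eapply is_RInt_ext; [|apply (is_RInt_sum_n (fun k t => (x - t) * ck t k) (Tk x))].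
    - intros t _. simplR. toR. exact (sum_n_mult_l (K:=R_Ring) (x - t) (ck t) K).
    - intro k. unfold ck, Tk.
      pose proof (int_poly x (2*(k+1)) (zeta (2*(k+1))) (proj1 Hx)) as H. exact H. }
  set (z2 := zeta 2).
  assert (Hz2 : 0 <= z2) by (unfold z2; apply (zeta_le2 2); lia).
  set (bnd := fun K t => 2 * PI * z2 * (t/(2*PI))^(2*K+4)).
  assert (Hb : forall K t, 0 < t < x -> Rabs (g t - P K t) <= bnd K t).
  { intros K t Ht.
    assert (Ht2 : 0 < t < 2*PI) by lra.
    assert (Hs : 0 < sin (t/2)) by (apply sin_gt_0; lra).
    assert (Eg : g t = (x - t) * Cs t) by (unfold g, W, Cs; field; neq0).
    rewrite Eg. unfold P. rewrite <- Rmult_minus_distr_l.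
    destruct (tail_bound t K Ht2) as [T0 T1].
    set (r := t/(2*PI)) in *.
    assert (Hr : 0 < r < 1).
    { unfold r. split. apply Rdiv_lt_0_compat; lra. apply Rmult_lt_reg_r with (2*PI). lra.
      unfold Rdiv. rewrite Rmult_assoc, Rinv_l; lra. }
    assert (Htr : t = 2 * PI * r) by (unfold r; field; neq0).
    rewrite Rabs_mult, !Rabs_pos_eq by lra.
    unfold bnd. fold r.
    assert (HrK : 0 <= r^(2*K+4)) by (apply pow_le; lra).
    apply Rle_trans with ((2*PI - t) * (z2 * r^(2*K+4) / (1 - r^2))).
    { unfold z2. apply Rmult_le_compat; lra. }
    rewrite Htr. 
    replace (2 * PI - 2 * PI * r) with (2 * PI * (1 - r)) by ring.
    replace (1 - r^2) with ((1 - r) * (1 + r)) by ring.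
    apply Rle_trans with (2 * PI * z2 * r ^ (2 * K + 4) * / (1 + r)).
    { right. field. neq0. }
    rewrite <- (Rmult_1_r (2 * PI * z2 * r ^ (2 * K + 4))) at 2.
    apply Rmult_le_compat_l. apply Rmult_le_pos; [|lra]. apply Rmult_le_pos; lra.
    rewrite <- Rinv_1. apply Rinv_le_contravar; lra. }
  assert (Hgex : forall K, is_RInt (fun t => g t - P K t) 0 x (Hf x - sum_n (Tk x) K)).
  { intro K. exact (is_RInt_minus _ _ _ _ _ _ Hg (HP K)). }
  assert (Hbnd : forall K, is_RInt (bnd K) 0 x (2*PI*z2 * (x/(2*PI))^(2*K+4) * x / (INR (2*K+4) + 1))).
  { intro K. unfold bnd. apply int_pow_lin. lra. }
  assert (HI : forall K, Rabs (Hf x - sum_n (Tk x) K) <= (2*PI) * (2*PI) * z2 * / INR (K + 1)).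
  { intro K.
    assert (E1 : RInt (fun t => g t - P K t) 0 x = Hf x - sum_n (Tk x) K) by (apply is_RInt_unique; auto).
    assert (E2 : RInt (bnd K) 0 x = 2*PI*z2 * (x/(2*PI))^(2*K+4) * x / (INR (2*K+4) + 1)) by (apply is_RInt_unique; auto).
    assert (E3 : RInt (fun t => - bnd K t) 0 x = - (2*PI*z2 * (x/(2*PI))^(2*K+4) * x / (INR (2*K+4) + 1))).
    { apply is_RInt_unique. apply (is_RInt_opp (V:=R_NormedModule) (bnd K)). auto. }
    assert (L1 : RInt (fun t => g t - P K t) 0 x <= RInt (bnd K) 0 x).
    { apply RInt_le. lra. eexists; eauto. eexists; eauto.
      intros t Ht. specialize (Hb K t Ht). pose proof (Rle_abs (g t - P K t)). lra. }
    assert (L2 : RInt (fun t => - bnd K t) 0 x <= RInt (fun t => g t - P K t) 0 x).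
    { apply RInt_le. lra. eexists; apply (is_RInt_opp (V:=R_NormedModule) (bnd K)); eauto. eexists; eauto.
      intros t Ht. specialize (Hb K t Ht). pose proof (Rle_abs (- (g t - P K t))). rewrite Rabs_Ropp in H. lra. }
    rewrite E1, E2 in L1. rewrite E1, E3 in L2.
    assert (V : 2*PI*z2 * (x/(2*PI))^(2*K+4) * x / (INR (2*K+4) + 1) <= (2*PI) * (2*PI) * z2 * / INR (K + 1)).
    { assert (Hxr : 0 <= (x/(2*PI))^(2*K+4) <= 1).
      { split. apply pow_le. left; apply Rdiv_lt_0_compat; lra.
        rewrite <- (pow1 (2*K+4)). apply pow_incr. split. left; apply Rdiv_lt_0_compat; lra.
        apply Rmult_le_reg_r with (2*PI). lra. unfold Rdiv. rewrite Rmult_assoc, Rinv_l; lra. }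
      assert (Hden : INR (K+1) <= INR (2*K+4) + 1).
      { rewrite INR_S1, plus_INR, mult_INR. simpl (INR 2). simpl (INR 4). pose proof (pos_INR K). lra. }
      assert (HK1 : 0 < INR (K+1)) by (rewrite INR_S1; pose proof (pos_INR K); lra).
      apply Rle_trans with ((2*PI*z2 * 1 * (2*PI)) * / (INR (2*K+4) + 1)).
      - unfold Rdiv. apply Rmult_le_compat_r. left; apply Rinv_0_lt_compat; lra.
        apply Rmult_le_compat; try lra. apply Rmult_le_pos; [apply Rmult_le_pos|]; lra.
        apply Rmult_le_compat_l; [apply Rmult_le_pos|]; lra.
      - replace (2 * PI * z2 * 1 * (2 * PI)) with (2 * PI * (2 * PI) * z2) by ring.
        apply Rmult_le_compat_l. apply Rmult_le_pos; [apply Rmult_le_pos|]; lra.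
        apply Rinv_le_contravar; lra. }
    apply Rabs_le. lra. }
  apply is_series_lim.
  set (e := fun K => (2*PI) * (2*PI) * z2 * / INR (K + 1)).
  assert (He : is_lim_seq e 0).
  { unfold e. replace (Finite 0) with (Rbar_mult ((2*PI) * (2*PI) * z2) 0) by (simpl; f_equal; ring).
    apply is_lim_seq_scal_l. apply inv_INR_S_lim. }
  apply (is_lim_seq_le_le (fun K => Hf x - e K) _ (fun K => Hf x + e K)).
  - intro K. specialize (HI K). unfold e. pose proof (Rle_abs (Hf x - sum_n (Tk x) K)). pose proof (Rle_abs (- (Hf x - sum_n (Tk x) K))). rewrite Rabs_Ropp in *. fix_sum. split; lra.
  - replace (Finite (Hf x)) with (Rbar_minus (Hf x) 0) by (simpl; f_equal; ring).
    apply is_lim_seq_minus'. apply is_lim_seq_const. exact He.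
  - replace (Finite (Hf x)) with (Rbar_plus (Hf x) 0) by (simpl; f_equal; ring).
    apply is_lim_seq_plus'. apply is_lim_seq_const. exact He.
Qed.

Lemma pos_case (z : R) : 0 < z <= 1 ->
  is_series
    (fun n : nat =>
       zeta (2 * (n + 1)) * z ^ (2 * (n + 1))
       / ((INR (n + 1) + 1) * (2 * INR (n + 1) + 1)))
    (1 / 2 - zeta 3 / (2 * PI ^ 2 * z ^ 2)
     + Cl3 (2 * PI * z) / (2 * PI ^ 2 * z ^ 2)
     + Cl2 (2 * PI * z) / (2 * PI * z)).
Proof.
  intro Hz. pose proof PI_RGT_0 as HPI.
  set (x := 2 * PI * z).
  assert (Hx : 0 < x <= 2 * PI) by (unfold x; split; nra).
  pose proof (stepC x Hx) as HC.
  pose proof (is_series_scal (K:=R_AbsRing) (2 / x^2) _ _ HC) as HC2.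
  eapply is_series_ext; [|match type of HC2 with is_series _ ?v => replace v with (1 / 2 - zeta 3 / (2 * PI ^ 2 * z ^ 2)
     + Cl3 (2 * PI * z) / (2 * PI ^ 2 * z ^ 2) + Cl2 (2 * PI * z) / (2 * PI * z)) in HC2; [exact HC2|] end].
  - intro n. simplR. toR. unfold Tk.
    replace (x / (2*PI)) with z by (unfold x; field; neq0).
    rewrite mult_INR, !INR_S1. pose proof (pos_INR n). simpl (INR 2).
    unfold x. field. neq0.
  - simplR. toR. unfold Hf. fold x. unfold x. field. neq0.
Qed.

Lemma Cl3_even y : Cl3 (- y) = Cl3 y.
Proof. unfold Cl3. apply Series_ext. intro n. replace (INR (n+1) * - y) with (- (INR (n+1) * y)) by ring. rewrite cos_neg. reflexivity. Qed.

Lemma Cl2_odd y : Cl2 (- y) = - Cl2 y.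
Proof.
  unfold Cl2. rewrite <- Series_opp. apply Series_ext. intro n.
  replace (INR (n+1) * - y) with (- (INR (n+1) * y)) by ring. rewrite sin_neg. field.
  rewrite INR_S1. pose proof (pos_INR n). neq0.
Qed.

Theorem corollary15 (z : R) (hz0 : 0 < Rabs z) (hz1 : Rabs z <= 1) :
  is_series
    (fun n : nat =>
       zeta (2 * (n + 1)) * z ^ (2 * (n + 1))
       / ((INR (n + 1) + 1) * (2 * INR (n + 1) + 1)))
    (1 / 2 - zeta 3 / (2 * PI ^ 2 * z ^ 2)
     + Cl3 (2 * PI * z) / (2 * PI ^ 2 * z ^ 2)
     + Cl2 (2 * PI * z) / (2 * PI * z)).
Proof.
  destruct (Rle_or_lt 0 z) as [Hz|Hz].
  - rewrite Rabs_pos_eq in hz0, hz1 by lra. apply pos_case. lra.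
  - rewrite Rabs_left in hz0, hz1 by lra.
    pose proof (pos_case (- z) ltac:(lra)) as H.
    eapply is_series_ext; [|match type of H with is_series _ ?v => replace v with (1 / 2 - zeta 3 / (2 * PI ^ 2 * z ^ 2)
     + Cl3 (2 * PI * z) / (2 * PI ^ 2 * z ^ 2) + Cl2 (2 * PI * z) / (2 * PI * z)) in H; [exact H|] end].
    + intro n. cbv beta. rewrite !pow_mult. replace ((- z)^2) with (z^2) by ring. reflexivity.
    + replace (2 * PI * - z) with (- (2 * PI * z)) by ring. rewrite Cl3_even, Cl2_odd.
      pose proof PI_RGT_0. field. neq0.
Qed.
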